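(* For every integer $n\ge1$, the number of walks $0=y_0,y_1,\dots,y_n=1$ with $y_i-y_{i-1}\in\{-2,-1,+1,+2\}$ for all $i$ and $y_i\ge1$ for all $1\le i\le n$ (basketball walks of length $n$ from the origin to altitude $1$ never returning to the $x$-axis) equals $$\frac1n\sum_{k=1}^{n}(-1)^{k+1}\binom{2k-2}{k-1}\binom{2n}{n-k}=\frac1n\sum_{i=0}^{n}\binom ni\binom{n}{2n+1-3i}.$$
   Context: Binomial coefficients $\binom ab$ with $b<0$ or $b>a\ge0$ are $0$. *)

(* Defs.v *)
From HB Require Import structures.
From mathcomp Require Import all_boot all_order all_algebra.
Set Implicit Arguments. Unset Strict Implicit. Unset Printing Implicit Defensive.
Import Order.TTheory GRing.Theory Num.Theory.
Local Open Scope ring_scope.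

Definition bstep (c : 'I_4) : int := [:: -2; -1; 1; 2]`_c.

(* A walk of length n is encoded by its sequence of steps s : 'I_n -> 'I_4;
   height s i = y_i = sum of the first i steps (y_0 = 0). *)
Definition height (n : nat) (s : {ffun 'I_n -> 'I_4}) (i : nat) : int :=
  \sum_(j < n | (j < i)%N) bstep (s j).

Definition bwalks_to1 (n : nat) : {set {ffun 'I_n -> 'I_4}} :=
  [set s | [forall i : 'I_n, 1 <= height s i.+1] && (height s n == 1)].

Definition binz (a : nat) (b : int) : nat :=
  match b with Posz m => 'C(a, m) | Negz _ => 0%N end.

(* Main.v *)
Require Import Defs.
From HB Require Import structures.
From mathcomp Require Import all_boot all_order all_algebra.
From mathcomp Require Import ring lra zify.
Import Order.TTheory GRing.Theory Num.Theory.
Local Open Scope ring_scope.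
Definition p0 (n : nat) : rat := let N := (n%:R : rat) in (- (((4 * 10 + 2) * 10 + 1) * 10 + 2) - ((((1 * 10 + 6) * 10 + 3) * 10 + 6) * 10 + 2) * N - ((((2 * 10) * 10 + 4) * 10 + 1) * 10 + 2) * N^+2 - (((9 * 10 + 8) * 10 + 8) * 10 + 2) * N^+3 - (((1 * 10 + 6) * 10 + 2) * 10) * N^+4).
Definition p1 (n : nat) : rat := let N := (n%:R : rat) in (- ((((1 * 10 + 5) * 10 + 1) * 10 + 2) * 10) - ((((3 * 10 + 1) * 10 + 5) * 10 + 3) * 10 + 6) * N - ((((2 * 10 + 4) * 10 + 3) * 10 + 9) * 10) * N^+2 - (((8 * 10 + 2) * 10 + 7) * 10 + 1) * N^+3 - (((1 * 10) * 10 + 3) * 10 + 5) * N^+4).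
Definition p2 (n : nat) : rat := let N := (n%:R : rat) in (- (((2 * 10 + 5) * 10 + 2) * 10) - (((3 * 10 + 2) * 10 + 6) * 10 + 8) * N - (((1 * 10 + 1) * 10 + 4) * 10 + 4) * N^+2 + 4 * N^+3 + 40 * N^+4).
Definition p3 (n : nat) : rat := let N := (n%:R : rat) in ((((2 * 10 + 2) * 10 + 4) * 10) + (((4 * 10) * 10 + 5) * 10 + 6) * N + (((2 * 10 + 6) * 10 + 8) * 10 + 4) * N^+2 + ((7 * 10 + 6) * 10 + 8) * N^+3 + 80 * N^+4).
Definition RB (n : nat) : {poly rat} := let N := (n%:R : rat) in
  ((- ((3 * 10 + 2) * 10) - ((4 * 10 + 8) * 10 + 8) * N - ((2 * 10 + 4) * 10 + 4) * N^+2 - 40 * N^+3))%:P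
  + ((- (((1 * 10 + 1) * 10 + 2) * 10) - (((1 * 10 + 7) * 10) * 10 + 8) * N - ((8 * 10 + 5) * 10 + 4) * N^+2 - ((1 * 10 + 4) * 10) * N^+3))%:P * 'X
  + ((- ((8 * 10 + 4) * 10) - (((1 * 10 + 6) * 10) * 10 + 4) * N - ((9 * 10 + 8) * 10 + 4) * N^+2 - ((1 * 10 + 9) * 10) * N^+3))%:P * 'X^2
  + ((- ((9 * 10 + 8) * 10) - (((2 * 10 + 1) * 10 + 8) * 10 + 2) * N - (((1 * 10 + 4) * 10 + 8) * 10 + 3) * N^+2 - ((3 * 10) * 10 + 5) * N^+3))%:P * 'X^3
  + ((- ((8 * 10 + 4) * 10) - (((1 * 10 + 4) * 10 + 4) * 10) * N - ((8 * 10 + 8) * 10 + 8) * N^+2 - ((1 * 10 + 8) * 10) * N^+3))%:P * 'X^4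
  + ((- ((4 * 10 + 2) * 10 + 6) * N - ((5 * 10 + 4) * 10) * N^+2 - ((1 * 10 + 5) * 10) * N^+3))%:P * 'X^5
  + ((((8 * 10 + 5) * 10 + 2) + (((1 * 10 + 3) * 10 + 1) * 10 + 4) * N + ((3 * 10 + 9) * 10) * N^+2))%:P * 'X^6
  + (((((1 * 10 + 6) * 10 + 8) * 10) + (((2 * 10 + 7) * 10 + 1) * 10 + 2) * N + (((1 * 10 + 2) * 10) * 10) * N^+2 + ((1 * 10 + 5) * 10) * N^+3))%:P * 'X^7
  + (((((2 * 10 + 5) * 10 + 2) * 10) + (((3 * 10 + 4) * 10 + 9) * 10 + 2) * N + (((1 * 10 + 4) * 10 + 5) * 10 + 8) * N^+2 + ((1 * 10 + 8) * 10) * N^+3))%:P * 'X^8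
  + (((((1 * 10 + 9) * 10 + 6) * 10) + (((3 * 10 + 6) * 10 + 4) * 10) * N + (((1 * 10 + 9) * 10 + 1) * 10 + 3) * N^+2 + ((3 * 10) * 10 + 5) * N^+3))%:P * 'X^9
  + (((((1 * 10 + 4) * 10) * 10) + (((2 * 10 + 4) * 10 + 4) * 10 + 4) * N + (((1 * 10 + 2) * 10 + 3) * 10 + 4) * N^+2 + ((1 * 10 + 9) * 10) * N^+3))%:P * 'X^10
  + (((((1 * 10 + 6) * 10 + 8) * 10) + (((2 * 10 + 3) * 10 + 1) * 10 + 4) * N + (((1 * 10) * 10 + 1) * 10 + 4) * N^+2 + ((1 * 10 + 4) * 10) * N^+3))%:P * 'X^11
  + ((((4 * 10 + 4) * 10 + 8) + ((6 * 10 + 3) * 10 + 2) * N + ((2 * 10 + 8) * 10 + 4) * N^+2 + 40 * N^+3))%:P * 'X^12.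
Definition RA (n : nat) : {poly rat} := let N := (n%:R : rat) in
  ((- (((1 * 10 + 1) * 10 + 2) * 10) - (((1 * 10 + 4) * 10 + 6) * 10 + 8) * N - ((6 * 10) * 10 + 8) * N^+2 - 80 * N^+3))%:P
  + ((- (((4 * 10 + 2) * 10) * 10) - (((5 * 10 + 8) * 10 + 2) * 10) * N - (((2 * 10 + 5) * 10 + 5) * 10 + 6) * N^+2 - ((3 * 10 + 6) * 10) * N^+3))%:P * 'X
  + ((- (((2 * 10 + 9) * 10 + 1) * 10 + 2) - (((3 * 10 + 3) * 10 + 5) * 10) * N - (((1 * 10) * 10 + 8) * 10 + 1) * N^+2 - 85 * N^+3))%:P * 'X^2
  + (((((1 * 10) * 10 + 5) * 10 + 2) + (((2 * 10 + 4) * 10 + 8) * 10 + 6) * N + (((1 * 10 + 6) * 10 + 8) * 10 + 4) * N^+2 + ((3 * 10 + 4) * 10) * N^+3))%:P * 'X^3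
  + (((((1 * 10) * 10 + 4) * 10 + 4) + (((1 * 10 + 7) * 10 + 2) * 10 + 8) * N + ((9 * 10 + 3) * 10 + 9) * N^+2 + ((1 * 10 + 6) * 10 + 5) * N^+3))%:P * 'X^4
  + ((((1 * 10 + 6) * 10) + ((2 * 10 + 4) * 10 + 4) * N + ((1 * 10 + 2) * 10 + 2) * N^+2 + 20 * N^+3))%:P * 'X^5.

Definition Phi : {poly rat} := 1 + 'X + 'X^3 + 'X^4.
Definition phi : {poly rat} := (1 + 'X)^+2.
Definition LL : {poly rat} := 1 + 4 * 'X.

Lemma certB (n : nat) :
  (p0 n)%:P * 'X^6 * Phi + (p1 n)%:P * 'X^4 * Phi^+2 + (p2 n)%:P * 'X^2 * Phi^+3
   + (p3 n)%:P * Phi^+4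
  = n%:R * 'X * Phi^`() * RB n + Phi * ('X * (RB n)^`() - (2 * n%:R + 7) * RB n).
Proof.
rewrite /Phi /RB ?derivD ?deriv_mulC ?derivC ?derivXn ?derivX.
rewrite /p0 /p1 /p2 /p3.
ring.
Qed.

Lemma certA (n : nat) :
  (p0 n)%:P * 'X^3 * phi + (p1 n)%:P * 'X^2 * phi^+2 + (p2 n)%:P * 'X * phi^+3
   + (p3 n)%:P * phi^+4
  = n%:R * 'X * phi^`() * LL * RA n + phi * 'X * (2 * RA n + LL * (RA n)^`())
    - (n%:R + 2) * phi * LL * RA n.
Proof.
have dphi : phi^`() = 2 * (1 + 'X).
  by rewrite /phi deriv_exp !derivE /=; ring.
rewrite dphi /phi /LL /RA ?derivD ?deriv_mulC ?derivC ?derivXn ?derivX.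
rewrite /p0 /p1 /p2 /p3.
ring.
Qed.


Lemma coef_telescope (Q : {poly rat}) m : ('X * Q^`() - Q *+ m)`_m = 0.
Proof.
rewrite coefB coefXM coefMn; case: m => [|m] /=; first by rewrite mulr0n subrr.
by rewrite coef_deriv subrr.
Qed.

Lemma coefXnM_add (p : {poly rat}) a b : ('X^a * p)`_(a + b) = p`_b.
Proof. by rewrite coefXnM ltnNge leq_addr /= addKn. Qed.

Definition Bc (n : nat) : rat := (Phi ^+ n)`_(2 * n + 1).

Lemma recB n : (1 <= n)%N ->
  p0 n * Bc n + p1 n * Bc n.+1 + p2 n * Bc n.+2 + p3 n * Bc n.+3 = 0.
Proof.
case: n => [//|k] _.
set n := k.+1.
set Q := Phi^+n * RB n.
have E : 'X * Q^`() - Q *+ (2 * n + 7) =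
   (p0 n)%:P * ('X^6 * Phi^+n) + (p1 n)%:P * ('X^4 * Phi^+n.+1)
   + (p2 n)%:P * ('X^2 * Phi^+n.+2) + (p3 n)%:P * (Phi^+n.+3).
  have -> : 'X * Q^`() - Q *+ (2 * n + 7) = Phi^+k *
     (n%:R * 'X * Phi^`() * RB n + Phi * ('X * (RB n)^`() - (2 * n%:R + 7) * RB n)).
    rewrite /Q derivM deriv_exp /n /= [Phi ^+ k.+1]exprS.
    move: (Phi^`()) (Phi ^+ k) (RB k.+1) ((RB k.+1)^`()) Phi => a b c d e.
    ring.
  rewrite -certB /n !exprS.
  move: (p0 k.+1)%:P (p1 k.+1)%:P (p2 k.+1)%:P (p3 k.+1)%:P (Phi ^+ k) Phi => a b c d e f.
  ring.
have := congr1 (fun p : {poly rat} => p`_(2 * n + 7)) E.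
rewrite coef_telescope /= !coefD !coefCM.
have -> : (2 * n + 7 = 6 + (2 * n + 1))%N by lia.
rewrite coefXnM_add.
have -> : (6 + (2 * n + 1) = 4 + (2 * n.+1 + 1))%N by lia.
rewrite coefXnM_add.
have -> : (4 + (2 * n.+1 + 1) = 2 + (2 * n.+2 + 1))%N by lia.
rewrite coefXnM_add.
have -> : (2 + (2 * n.+2 + 1) = (2 * n.+3 + 1))%N by lia.
by rewrite /Bc => <-.
Qed.


Lemma bin_rec i : (i.+1 * 'C(2 * i.+1, i.+1) = 2 * (2 * i + 1) * 'C(2 * i, i))%N.
Proof.
have h1 : (2 * i.+1 * 'C(2 * i + 1, i) = i.+1 * 'C(2 * i.+1, i.+1))%N.
  move: (mul_bin_diag (2 * i.+1) i).
  by rewrite (_ : (2 * i.+1).-1 = 2 * i + 1)%N //; lia.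
have h2 : ((2 * i).+1 * 'C(2 * i, i) = i.+1 * 'C(2 * i + 1, i))%N.
  move: (mul_bin_down (2 * i).+1 i).
  by rewrite (_ : (2 * i).+1 - i = i.+1)%N ?addn1 //; lia.
apply/eqP; rewrite -(eqn_pmul2l (ltn0Sn i)) -h1; apply/eqP.
nia.
Qed.

Definition acoef (i : nat) : rat := (-1) ^+ i * ('C(2 * i, i))%:R.

Definition fser (M : nat) : {poly rat} := \poly_(i < M) acoef i.

Lemma a_rec i : acoef i.+1 *+ i.+1 + acoef i *+ (4 * i + 2) = 0.
Proof.
have h := congr1 (fun x : nat => x%:R : rat) (bin_rec i).
rewrite /= !natrM in h.
rewrite /acoef.
have -> : ((-1) ^+ i.+1 * ('C(2 * i.+1, i.+1))%:R) *+ i.+1 + ((-1) ^+ i * ('C(2 * i, i))%:R) *+ (4 * i + 2)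
   = (-1) ^+ i * ((4 * i + 2)%:R * ('C(2 * i, i))%:R - i.+1%:R * ('C(2 * i.+1, i.+1))%:R :> rat).
  by rewrite exprS; ring.
rewrite h (_ : 4 * i + 2 = 2 * (2 * i + 1))%N; last by lia.
by rewrite natrM subrr mulr0.
Qed.



Lemma err_low M i : (i.+1 < M)%N ->
  (LL * (fser M)^`() + 2 * fser M)`_i = 0.
Proof.
move=> hi.
have -> : LL * (fser M)^`() + 2 * fser M =
   (fser M)^`() + ('X * (fser M)^`()) *+ 4 + fser M *+ 2.
  rewrite /LL. ring.
rewrite !coefD !coefXM !coef_deriv !coef_poly.
have h0 : (0 < M)%N by apply: ltn_trans hi.
case: i hi => [|j] hi /=.
  rewrite hi h0 -[RHS](a_rec 0) /=.
  by rewrite (_ : (4 * 0 + 2 = 2)%N) // mulr2n !addr0.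
have h1 : (j.+1 < M)%N by apply: ltn_trans hi.
rewrite hi h1 -[RHS](a_rec j.+1) -addrA; congr (_ + _).
rewrite -!mulrnDr -mulr2n -mulrnDr; congr (_ *+ _); lia.
Qed.

Lemma coef_phin n t : (phi^+n)`_t = ('C(2 * n, t))%:R.
Proof.
rewrite /phi -exprM addrC exprD1n coef_sum.
rewrite (eq_bigr (fun i : 'I_(2 * n).+1 => if (i == t :> nat) then ('C(2 * n, t))%:R else 0 : rat)); last first.
  move=> i _; rewrite coefMn coefXn eq_sym.
  by case: eqP => [->|_]; rewrite ?mul0rn.
rewrite -big_mkcond (big_ord1_eq _ (fun=> ('C(2 * n, t))%:R : rat) t).
case: ltnP => // ht; by rewrite bin_small.
Qed.

Definition Aseq (n : nat) : rat := \sum_(1 <= k < n.+1)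
       (-1) ^+ k.+1 * ('C(2 * k - 2, k - 1))%:R * ('C(2 * n, n - k))%:R.

Lemma A_coef n M : (1 <= n)%N -> (n <= M)%N -> (phi^+n * fser M)`_(n.-1) = Aseq n.
Proof.
case: n => [//|n] _ hM.
rewrite mulrC coefM /Aseq big_add1 /= big_mkord.
apply: eq_bigr => j _.
rewrite coef_poly (leq_trans (ltn_ord j) hM) coef_phin /acoef.
rewrite (_ : (2 * j.+1 - 2 = 2 * j)%N); last by lia.
rewrite subn1 /= subSS.
by rewrite !exprS !mulN1r opprK.
Qed.

Lemma coefM_low (p e : {poly rat}) i :
  (forall j, (j <= i)%N -> e`_j = 0) -> (p * e)`_i = 0.
Proof.
move=> H; rewrite coefM big1 // => j _.
by rewrite H ?mulr0 // leq_subr.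
Qed.

Lemma recA n : (1 <= n)%N ->
  p0 n * Aseq n + p1 n * Aseq n.+1 + p2 n * Aseq n.+2 + p3 n * Aseq n.+3 = 0.
Proof.
case: n => [//|k] _.
set n := k.+1.
set M := (n + 5)%N.
set f := fser M.
set err := LL * f^`() + 2 * f.
set Q := phi^+n * LL * RA n * f.
have Hf : LL * f^`() = err - 2 * f by rewrite /err addrK.
have dLL : LL^`() = 4 by rewrite /LL !derivE; ring.
have E : 'X * Q^`() - Q *+ (n + 2) =
   (p0 n)%:P * ('X^3 * (phi^+n * f)) + (p1 n)%:P * ('X^2 * (phi^+n.+1 * f))
   + (p2 n)%:P * ('X * (phi^+n.+2 * f)) + (p3 n)%:P * (phi^+n.+3 * f)
   + ('X * (phi^+n * RA n)) * err.
  have -> : Q^`() = (phi^+n * LL * RA n)^`() * f + phi^+n * RA n * (LL * f^`()).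
    rewrite /Q derivM.
    ring.
  rewrite Hf !derivM dLL deriv_exp /=.
  transitivity (phi^+k * f * (n%:R * 'X * phi^`() * LL * RA n + phi * 'X * (2 * RA n + LL * (RA n)^`())
    - (n%:R + 2) * phi * LL * RA n) + 'X * (phi^+n * RA n) * err).
    rewrite /Q /n !exprS.
    ring.
  rewrite -certA /n !exprS.
  move: (p0 k.+1)%:P (p1 k.+1)%:P (p2 k.+1)%:P (p3 k.+1)%:P (phi ^+ k) phi => a b c d e g.
  ring.
have := congr1 (fun p : {poly rat} => p`_(n + 2)) E.
have Z : ('X * (phi^+n * RA n) * err)`_(n + 2) = 0.
  apply: coefM_low => j hj; rewrite /err /f err_low // /M; lia.
rewrite coef_telescope /= !coefD !coefCM Z addr0.
have -> : (n + 2 = 3 + k)%N by lia.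
rewrite coefXnM_add.
have -> : (3 + k = 2 + k.+1)%N by lia.
rewrite coefXnM_add coefXM /=.
rewrite !A_coef //; rewrite /M; lia.
Qed.

Set Implicit Arguments. Unset Strict Implicit.

Definition extw k (s : {ffun 'I_k.+1 -> 'I_4}) (m : nat) : int :=
  bstep (s (inord (m %% k.+1))).
Definition Yw k (s : {ffun 'I_k.+1 -> 'I_4}) (m : nat) : int :=
  \sum_(0 <= j < m) extw s j.
Definition rotw k (s : {ffun 'I_k.+1 -> 'I_4}) (r : nat) : {ffun 'I_k.+1 -> 'I_4} :=
  [ffun j : 'I_k.+1 => s (inord ((j + r) %% k.+1))].

Lemma bstep_ge c : -2 <= bstep c.
Proof. case: c => -[|[|[|[|//]]]] h; rewrite /bstep /=; lia. Qed.

Lemma extw_modD k s m : @extw k s (m + k.+1) = extw s m.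
Proof. by rewrite /extw modnDr. Qed.

Lemma Yw0 k s : @Yw k s 0 = 0.
Proof. by rewrite /Yw big_geq. Qed.

Lemma YwS k s m : @Yw k s m.+1 = Yw s m + extw s m.
Proof. by rewrite /Yw big_nat_recr. Qed.

Lemma Yw_add k s m : @Yw k s (m + k.+1) = Yw s m + Yw s k.+1.
Proof.
elim: m => [|m IH]; first by rewrite add0n Yw0 add0r.
by rewrite addSn (YwS s (m + k.+1)) IH extw_modD (YwS s m) addrAC.
Qed.

Lemma Yw_ge k s m : - (2 * m%:Z) <= @Yw k s m.
Proof.
elim: m => [|m IH]; first by rewrite Yw0.
rewrite YwS; have := bstep_ge (s (inord (m %% k.+1))); rewrite /extw; lia.
Qed.

Lemma height_Yw k s i : (i <= k.+1)%N -> height s i = @Yw k s i.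
Proof.
move=> hi; rewrite /height /Yw big_mkord (big_ord_widen k.+1 (fun j => extw s j) hi).
apply: eq_bigr => j _; rewrite /extw; congr (bstep (s _)).
by apply: val_inj; rewrite /= inordK modn_small // ltn_pmod.
Qed.

Lemma extw_rot k s r m : extw (@rotw k s r) m = extw s (m + r).
Proof. by rewrite /extw /rotw ffunE inordK ?ltn_pmod // modnDml. Qed.

Lemma Yw_rot k s r i : Yw (@rotw k s r) i = Yw s (r + i) - Yw s r.
Proof.
have -> : Yw s (r + i) = Yw s r + \sum_(r <= j < r + i) extw s j.
  by rewrite /Yw (@big_cat_nat _ _ _ r) // leq_addr.
rewrite [Yw s r + _]addrC addrK /Yw (big_addn 0 (r + i) r) addKn.
by apply: eq_bigr => j _; rewrite extw_rot.
Qed.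

Lemma height_rot k s r i : (i <= k.+1)%N ->
  height (@rotw k s r) i = Yw s (r + i) - Yw s r.
Proof. by move=> hi; rewrite height_Yw // Yw_rot. Qed.

Lemma rot_valid k s r : (@rotw k s r \in bwalks_to1 k.+1) =
  [forall i : 'I_k.+1, 1 <= Yw s (r + i.+1) - Yw s r] && (Yw s k.+1 == 1).
Proof.
rewrite inE height_rot // Yw_add addrAC subrr add0r.
congr andb.
by apply: eq_forallb => i; rewrite height_rot.
Qed.


Lemma valid_unique k (s : {ffun 'I_k.+1 -> 'I_4}) (r r' : 'I_k.+1) :
  rotw s r \in bwalks_to1 k.+1 -> rotw s r' \in bwalks_to1 k.+1 -> r = r'.
Proof.
wlog lt : r r' / (r < r')%N.
  move=> W h h'; case: (ltngtP r r') => [l|l|/val_inj //].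
  - exact: W.
  - by apply/esym/W.
have hr' := ltn_ord r'.
rewrite !rot_valid => /andP [/forallP h /eqP h1] /andP [/forallP h' _].
have i1 : ((r' - r - 1) < k.+1)%N by have := ltn_ord r'; clear h h'; lia.
have := h (Ordinal i1); rewrite /= (_ : (r + (r' - r - 1).+1 = r')%N); last by clear h h'; lia.
have i2 : ((r + k.+1 - r' - 1) < k.+1)%N by have := ltn_ord r'; clear h h'; lia.
have := h' (Ordinal i2); rewrite /= (_ : (r' + (r + k.+1 - r' - 1).+1 = r + k.+1)%N); last by clear h h'; lia.
rewrite Yw_add h1 => b a; exfalso; clear h h'; lia.
Qed.

Lemma aux1 (Fa Fb : nat) (Ya Yb c : int) :
  Fa%:Z = Ya + c -> Fb%:Z = Yb + c -> (Fa < Fb)%N -> 1 <= Yb - Ya.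
Proof. lia. Qed.

Lemma aux2 (Fa Fb : nat) (Ya Yb c : int) :
  Fa%:Z = Ya + c -> Fb%:Z = Yb + c -> (Fa <= Fb)%N -> 1 <= Yb + 1 - Ya.
Proof. lia. Qed.

Lemma aux3 (r c : nat) (y : int) : - (2 * r%:Z) <= y -> (r < c)%N -> 0 <= y + (2 * c)%:Z.
Proof. lia. Qed.

Lemma valid_exists k (s : {ffun 'I_k.+1 -> 'I_4}) : Yw s k.+1 = 1 ->
  exists r : 'I_k.+1, rotw s r \in bwalks_to1 k.+1.
Proof.
move=> h1.
pose F (r : 'I_k.+1) := absz (Yw s r + (2 * k.+1)%:Z).
have FZ : forall r : 'I_k.+1, (F r)%:Z = Yw s r + (2 * k.+1)%:Z.
  move=> r; rewrite /F gez0_abs //.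
  exact: (aux3 (Yw_ge s r) (ltn_ord r)).
have [r0 _ Hmin] := @arg_minnP _ (ord0 : 'I_k.+1) xpredT F isT.
have [r1 /eqP Hr1 Hmax] := @arg_maxnP _ r0 (fun r => F r == F r0) (fun r => nat_of_ord r) (eqxx _).
exists r1; rewrite rot_valid h1 eqxx andbT; apply/forallP => i.
case: (ltnP (r1 + i.+1) k.+1) => hj.
  have hne : F (Ordinal hj) != F r0.
    apply/negP => /Hmax /=; rewrite leqNgt; apply/negP/negPn.
    by rewrite -addSnnS leq_addr.
  have hlt : (F r1 < F (Ordinal hj))%N.
    by rewrite Hr1 ltn_neqAle eq_sym hne Hmin.
  exact: (aux1 (FZ r1) (FZ (Ordinal hj)) hlt).
have hj' : (r1 + i.+1 - k.+1 < k.+1)%N.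
  have := ltn_ord r1; have := ltn_ord i; clear; lia.
have e : (r1 + i.+1 = Ordinal hj' + k.+1)%N by rewrite /= subnK.
rewrite e Yw_add h1.
have hle : (F r1 <= F (Ordinal hj'))%N by rewrite Hr1 Hmin.
exact: (aux2 (FZ r1) (FZ (Ordinal hj')) hle).
Qed.

Lemma count_valid k (s : {ffun 'I_k.+1 -> 'I_4}) :
  #|[set r : 'I_k.+1 | rotw s r \in bwalks_to1 k.+1]| = (height s k.+1 == 1).
Proof.
rewrite height_Yw //; case: (boolP (Yw s k.+1 == 1)) => [/eqP h|h].
  have [r1 v1] := valid_exists h.
  rewrite (_ : [set r | _] = [set r1]) ?cards1 //.
  apply/setP => r; rewrite in_set in_set1; apply/idP/eqP => [v|->//].
  exact: valid_unique v v1.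
apply/eqP; rewrite cards_eq0; apply/eqP/setP => r.
by rewrite in_set in_set0 rot_valid (negbTE h) andbF.
Qed.

Lemma rotw_inj k (r : 'I_k.+1) : injective (fun s => @rotw k s r).
Proof.
move=> s t H; apply/ffunP => j.
pose j' : 'I_k.+1 := inord ((j + (k.+1 - r)) %% k.+1).
have := congr1 (fun f : {ffun 'I_k.+1 -> 'I_4} => f j') H; rewrite /= /rotw !ffunE.
have -> : (inord ((j' + r) %% k.+1) : 'I_k.+1) = j; last by [].
apply: val_inj; rewrite /= inordK ?ltn_pmod // /j' inordK ?ltn_pmod //.
rewrite modnDml -addnA subnK ?(ltnW (ltn_ord r)) // modnDr modn_small //.
Qed.

Lemma card_set_sum (T : finType) (p : pred T) : #|[set x | p x]| = (\sum_x (p x : nat))%N.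
Proof.
rewrite -sum1_card big_mkcond /=; apply: eq_bigr => x _.
by rewrite inE; case: (p x).
Qed.

Lemma cycle_count k : (#|bwalks_to1 k.+1| * k.+1 =
   #|[set s : {ffun 'I_k.+1 -> 'I_4} | height s k.+1 == 1]|)%N.
Proof.
have -> : (#|bwalks_to1 k.+1| * k.+1 = \sum_(r : 'I_k.+1) #|bwalks_to1 k.+1|)%N.
  by rewrite sum_nat_const card_ord mulnC.
transitivity (\sum_(r : 'I_k.+1) #|[set s | rotw s r \in bwalks_to1 k.+1]|)%N.
  apply: eq_bigr => r _; rewrite -[#|bwalks_to1 k.+1|](card_preimset _ (@rotw_inj k r)).
  by apply: eq_card => s; rewrite !inE.
under eq_bigr do rewrite card_set_sum.
rewrite exchange_big /= card_set_sum; apply: eq_bigr => s _.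
by rewrite -(card_set_sum (fun i : 'I_k.+1 => rotw s i \in bwalks_to1 k.+1)) count_valid.
Qed.


Lemma A123 : Aseq 1 = 1 /\ Aseq 2 = 2 /\ Aseq 3 = 9.
Proof.
rewrite /Aseq; split; [|split].
- by rewrite big_nat1; vm_compute.
- by rewrite big_nat_recr //= big_nat1; vm_compute.
- by rewrite big_nat_recr //= big_nat_recr //= big_nat1; vm_compute.
Qed.

Lemma coef_1Xn m t : ((1 + 'X : {poly rat})^+m)`_t = ('C(m, t))%:R.
Proof.
rewrite addrC exprD1n coef_sum.
rewrite (eq_bigr (fun i : 'I_m.+1 => if (i == t :> nat) then ('C(m, t))%:R else 0 : rat)); last first.
  move=> i _; rewrite coefMn coefXn eq_sym.
  by case: eqP => [->|_]; rewrite ?mul0rn.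
rewrite -big_mkcond (big_ord1_eq _ (fun=> ('C(m, t))%:R : rat) t).
case: ltnP => // ht; by rewrite bin_small.
Qed.

Definition Bsum (n : nat) : rat := \sum_(0 <= i < n.+1)
       ('C(n, i))%:R * (binz n (2 * n%:Z + 1 - 3 * i%:Z))%:R.

Lemma binzE n i : ((binz n (2 * n%:Z + 1 - 3 * i%:Z))%:R : rat) =
  (if (2 * n + 1 < 3 * i)%N then 0 else ('C(n, 2 * n + 1 - 3 * i))%:R).
Proof.
case: ltnP => h.
  have : (2 * n%:Z + 1 - 3 * i%:Z) < 0 by lia.
  by case: (2 * n%:Z + 1 - 3 * i%:Z).
by rewrite (_ : 2 * n%:Z + 1 - 3 * i%:Z = Posz (2 * n + 1 - 3 * i)%N) //; lia.
Qed.

Lemma Bc_sum n : Bc n = Bsum n.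
Proof.
rewrite /Bc.
have -> : Phi^+n = \sum_(i < n.+1) ('X^(3 * i) * (1 + 'X)^+n) *+ 'C(n, i).
  rewrite (_ : Phi = ('X^3 + 1) * (1 + 'X)); last by rewrite /Phi; ring.
  rewrite exprMn exprD1n mulr_suml; apply: eq_bigr => i _.
  by rewrite -exprM mulrnAl.
rewrite coef_sum /Bsum big_mkord; apply: eq_bigr => i _.
by rewrite coefMn coefXnM coef_1Xn mulr_natl binzE.
Qed.

Lemma B123 : Bc 1 = 1 /\ Bc 2 = 2 /\ Bc 3 = 9.
Proof.
rewrite !Bc_sum /Bsum; split; [|split].
- by rewrite big_nat_recr //= big_nat1; vm_compute.
- by rewrite big_nat_recr //= big_nat_recr //= big_nat1; vm_compute.
- by rewrite big_nat_recr //= big_nat_recr //= big_nat_recr //= big_nat1; vm_compute.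
Qed.

Lemma p3_neq0 n : p3 n != 0.
Proof.
rewrite /p3; apply: lt0r_neq0.
have h0 : 0 <= (n%:R : rat) := ler0n _ _.
have h2 : 0 <= (n%:R : rat) ^+ 2 := exprn_ge0 _ h0.
have h3 : 0 <= (n%:R : rat) ^+ 3 := exprn_ge0 _ h0.
have h4 : 0 <= (n%:R : rat) ^+ 4 := exprn_ge0 _ h0.
move: (n%:R : rat) h0 h2 h3 h4 => N h0 h2 h3 h4 /=.
lra.
Qed.

Lemma A_eq_B n : (1 <= n)%N -> Aseq n = Bc n.
Proof.
suff H : forall m, Aseq m.+1 = Bc m.+1 /\ Aseq m.+2 = Bc m.+2 /\ Aseq m.+3 = Bc m.+3.
  by case: n => [//|m] _; case: (H m).
elim=> [|m [h1 [h2 h3]]].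
  have [a1 [a2 a3]] := A123; have [b1 [b2 b3]] := B123.
  by rewrite a1 a2 a3 b1 b2 b3.
split => //; split => //.
have eA := recA m.+1 (ltn0Sn m); have eB := recB m.+1 (ltn0Sn m).
apply: (mulfI (p3_neq0 m.+1)).
move: eA; rewrite h1 h2 h3 -eB => /addrI.
done.
Qed.

Definition gstep (c : 'I_4) : nat := nth 0%N [:: 0; 1; 3; 4]%N c.

Lemma bstep_g c : bstep c = (gstep c)%:Z - 2.
Proof. by case: c => -[|[|[|[|//]]]]. Qed.

Lemma height_g n (s : {ffun 'I_n -> 'I_4}) :
  height s n = (\sum_j gstep (s j))%:Z - (2 * n)%:Z.
Proof.
rewrite /height.
have -> : \sum_(j < n | (j < n)%N) bstep (s j) = \sum_(j < n) bstep (s j).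
  by apply: eq_bigl => j; rewrite ltn_ord.
have E : \sum_(j < n) bstep (s j) = \sum_(j < n) ((gstep (s j))%:Z - 2).
  by apply: eq_bigr => j _; exact: bstep_g.
rewrite E sumrB sumr_const card_ord (big_morph Posz PoszD (erefl 0%:Z)).
congr (_ - _); rewrite -mulr_natr natz PoszM; lia.
Qed.

Lemma Phi_sum : Phi = \sum_(c : 'I_4) 'X^(gstep c).
Proof.
by rewrite !big_ord_recr big_ord0 /= /Phi add0r expr0 expr1.
Qed.

Lemma card_g n m : (#|[set s : {ffun 'I_n -> 'I_4} | (\sum_j gstep (s j) == m)%N]|)%:R
   = (Phi^+n)`_m.
Proof.
rewrite Phi_sum -[n in _ ^+ n]card_ord -prodr_const bigA_distr_bigA /=.
under eq_bigr do rewrite prodrXr.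
rewrite coef_sum card_set_sum natr_sum; apply: eq_bigr => s _.
by rewrite coefXn eq_sym; case: eqP.
Qed.

Lemma card_height1 n :
  (#|[set s : {ffun 'I_n -> 'I_4} | height s n == 1]|)%:R = Bc n.
Proof.
rewrite /Bc -card_g; congr (_%:R); apply: eq_card => s; rewrite !inE height_g.
by apply/eqP/eqP; lia.
Qed.

Unset Implicit Arguments.

Theorem proposition3p5 (n : nat) (hn : (1 <= n)%N) :
  (#|bwalks_to1 n|%:R : rat) =
    n%:R^-1 * \sum_(1 <= k < n.+1)
       (-1) ^+ k.+1 * ('C(2 * k - 2, k - 1))%:R * ('C(2 * n, n - k))%:R
  /\
  (#|bwalks_to1 n|%:R : rat) =
    n%:R^-1 * \sum_(0 <= i < n.+1)
       ('C(n, i))%:R * (binz n (2 * n%:Z + 1 - 3 * i%:Z))%:R.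
Proof.
have key : (#|bwalks_to1 n|%:R : rat) = n%:R^-1 * Bc n.
  case: n hn => [//|k] _.
  rewrite -card_height1 -cycle_count natrM [X in _ * X]mulrC mulKf //.
  by rewrite pnatr_eq0.
split.
  by rewrite key -A_eq_B.
by rewrite key Bc_sum.
Qed.
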